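(* Let $m\geq 0$ and $n>1$. There is an injection from $P_2(-m+1,n)$ to $Q_2(m,n)$.
   Context: Partitions are identified with their $m$-Durfee rectangle symbols, defined as follows. - For a partition $\lambda$ of $n$ with $\ell(\lambda)>m$ parts, let $j\geq1$ be the largest integer with $\lambda_{m+j}\geq j$. Let $\alpha$ be the partition whose $i$-th part is the number of $k\leq m+j$ with $\lambda_k\geq j+i$ (the columns right of the $(m+j)\times j$ rectangle). Let $\beta=(\lambda_{m+j+1},\lambda_{m+j+2},\ldots)$ (the rows below the rectangle). - If $\ell(\lambda)\leq m$, set $j=0$, $\alpha=\lambda'$ (the conjugate) and $\beta=\emptyset$. The symbol is written $(\alpha,\beta)_{(m+j)\times j}$, with $\ell(\cdot)$ denoting number of parts. The first part of an empty sequence is taken to be $0$. $P(-m+1,n)$ is the set of partitions of $n$ with rank (largest part minus number of parts) at least $-m+1$. $P_2(-m+1,n)$ is the set of those $(\alpha,\beta)_{(m+j)\times j}\in P(-m+1,n)$ with $j\geq1$ and $\beta_1=j-1$. The rank-set of $\lambda=(\lambda_1,\ldots,\lambda_\ell)$ is $[-\lambda_1,1-\lambda_2,\ldots,\ell-1-\lambda_\ell,\ell,\ell+1,\ldots]$. $Q(m,n)$ is the set of partitions of $n$ whose rank-set contains $m$. $Q_2(m,n)$ is the set of $(\gamma,\delta)_{(m+j')\times j'}\in Q(m,n)$ with $j'\geq1$, $\ell(\delta)-\ell(\gamma)\geq 0$ and $\gamma_1<m+j'$. *)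

(* Defs.v *)
From mathcomp Require Import all_boot all_order all_algebra.
Set Implicit Arguments. Unset Strict Implicit. Unset Printing Implicit Defensive.
Import Order.TTheory GRing.Theory Num.Theory.

(* Partitions are represented as seq nat listing the parts in
   nonincreasing order; the i-th part (1-indexed) is  nth 0 l i.-1 . *)

Definition part (l : seq nat) (i : nat) : nat := nth 0 l i.-1.

Definition is_partition (n : nat) (l : seq nat) : bool :=
  [&& sorted geq l, all (fun x => 0 < x) l & sumn l == n].

Definition conj_part (l : seq nat) : seq nat :=
  [seq count (fun x => i <= x) l | i <- iota 1 (head 0 l)].

(* j of the m-Durfee rectangle: largest j >= 1 with l_{m+j} >= j
   (0 if l has at most m parts; such j always satisfy j <= size l). *)
Definition durfee_j (m : nat) (l : seq nat) : nat :=
  if m < size l then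
    \max_(1 <= j < (size l).+1 | j <= part l (m + j)) j
  else 0.

(* alpha: i-th part = #{k <= m+j : l_k >= j+i}; nonzero exactly for
   i = 1 .. l_1 - j. *)
Definition durfee_alpha (m : nat) (l : seq nat) : seq nat :=
  if m < size l then
    let j := durfee_j m l in
    [seq count (fun x => j + i <= x) (take (m + j) l) | i <- iota 1 (head 0 l - j)]
  else conj_part l.

Definition durfee_beta (m : nat) (l : seq nat) : seq nat :=
  if m < size l then drop (m + durfee_j m l) l else [::].

Definition rank (l : seq nat) : int := (head 0 l)%:Z - (size l)%:Z.

Definition inP (m n : nat) (l : seq nat) : bool :=
  is_partition n l && ((1 - m%:Z)%R <= rank l)%R.

Definition inP2 (m n : nat) (l : seq nat) : bool :=
  [&& inP m n l, 1 <= durfee_j m l & head 0 (durfee_beta m l) == (durfee_j m l).-1].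

(* rank-set of l = [-l_1, 1-l_2, ..., ell-1-l_ell, ell, ell+1, ...];
   r is in it iff r = k-1-l_k for some 1 <= k <= ell, or r >= ell. *)
Definition in_rank_set (r : int) (l : seq nat) : bool :=
  [|| has (fun k => r == ((k%:Z - 1) - (part l k)%:Z)%R) (iota 1 (size l))
    | ((size l)%:Z <= r)%R].

Definition inQ (m n : nat) (l : seq nat) : bool :=
  is_partition n l && in_rank_set m%:Z l.

Definition inQ2 (m n : nat) (l : seq nat) : bool :=
  [&& inQ m n l, 1 <= durfee_j m l,
      size (durfee_alpha m l) <= size (durfee_beta m l)
    & head 0 (durfee_alpha m l) < m + durfee_j m l].

(* Main.v *)
Require Import Defs.
From mathcomp Require Import all_boot all_order all_algebra.
From mathcomp Require Import zify.

Lemma nth_mono (l : seq nat) i k : sorted geq l -> i <= k -> nth 0 l k <= nth 0 l i.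
Proof.
move=> hs hik; case: (ltnP k (size l)) => hk; last by rewrite nth_default.
have hi : i < size l by apply: leq_ltn_trans hk.
have := @sorted_leq_nth _ geq (fun a b c h1 h2 => leq_trans h2 h1) (@leqnn) 0 l hs i k.
by apply.
Qed.

Lemma nth_pos_size (l : seq nat) i : 0 < nth 0 l i -> i < size l.
Proof. by case: (ltnP i (size l)) => // h; rewrite nth_default. Qed.

Lemma nth_pos (l : seq nat) i : all (fun x => 0 < x) l -> i < size l -> 0 < nth 0 l i.
Proof. by move=> /(all_nthP 0) H /H. Qed.

Lemma bigmax_P (r : seq nat) (P : pred nat) :
  0 < \max_(i <- r | P i) i -> P (\max_(i <- r | P i) i).
Proof.
elim: r => [|x r IH]; first by rewrite big_nil.
rewrite big_cons; case: ifP => // Px.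
rewrite /maxn; case: ifP => // _ h; exact: IH.
Qed.

Lemma durfee_j_eq m s j : sorted geq s -> 1 <= j -> j <= nth 0 s (m + j).-1 ->
  nth 0 s (m + j) <= j -> durfee_j m s = j.
Proof.
move=> hs hj h1 h2.
have hsz : (m + j).-1 < size s by apply: nth_pos_size; apply: leq_trans h1.
rewrite /durfee_j ifT; last by lia.
apply/eqP; rewrite eqn_leq; apply/andP; split.
  apply/bigmax_leqP_seq => i; rewrite mem_index_iota => /andP[hi1 hi2].
  rewrite /part => hP; rewrite leqNgt; apply/negP => hji.
  have := nth_mono s (m + j) ((m + i).-1) hs ltac:(lia).
  lia.
apply: (leq_bigmax_seq (F := fun i => i)); last by rewrite /part.
rewrite mem_index_iota; lia.
Qed.

Lemma P2_facts {m n l} : inP2 m n l ->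
  [/\ sorted geq l, all (fun x => 0 < x) l, sumn l = n &
      (size l).+1 <= head 0 l + m] /\
  [/\ 1 <= durfee_j m l, durfee_j m l <= nth 0 l (m + durfee_j m l).-1
    & nth 0 l (m + durfee_j m l) = (durfee_j m l).-1].
Proof.
rewrite /inP2 /inP /is_partition /rank => /and3P[/andP[/and3P[hs hp /eqP hsum] hr] hj hb].
have hms : m < size l by move: hj; rewrite /durfee_j; case: ifP.
move: hb; rewrite /durfee_beta hms -nth0 nth_drop addn0 => /eqP hb.
have hP : durfee_j m l <= part l (m + durfee_j m l).
  by move: hj; rewrite /durfee_j hms; apply: bigmax_P.
split; split => //; lia.
Qed.

Section F.
Variable m : nat.

Definition g (l : seq nat) (i : nat) : nat :=
  if i.+1 < m + durfee_j m l then nth 0 l i.+1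
  else if i <= m + durfee_j m l then durfee_j m l else (nth 0 l i).+1.

Definition F (l : seq nat) : seq nat := mkseq (g l) (head 0 l + m).

End F.

Lemma nth_F m l i : i < head 0 l + m -> nth 0 (F m l) i = g m l i.
Proof. by move=> hi; rewrite nth_mkseq. Qed.

Lemma size_F m l : size (F m l) = head 0 l + m.
Proof. by rewrite size_mkseq. Qed.

Lemma F_sorted {m n l} : inP2 m n l -> sorted geq (F m l).
Proof.
move=> /P2_facts[[hs hp hsum hsz] [hj hj1 hj2]].
set j := durfee_j m l in hj hj1 hj2.
apply/(sortedP 0) => i; rewrite size_F => hi.
rewrite !nth_F; try lia.
rewrite /g -/j /=.
have mo := nth_mono l _ _ hs.
case: (ltnP i.+2 (m + j)) => h1.
  rewrite ifT; [exact: mo | lia].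
case: (ltnP i.+1 (m + j)) => h2.
  rewrite ifT; last by lia.
  by have -> : i.+1 = (m + j).-1 by lia.
case: (leqP i.+1 (m + j)) => h3.
  by rewrite ifT //; lia.
case: (leqP i (m + j)) => h4.
  have ei : i = m + j by lia.
  rewrite ei; have := mo (m + j) (m + j).+1 (leqnSn _); lia.
by rewrite ltnS; apply: mo.
Qed.

Lemma F_pos {m n l} : inP2 m n l -> all (fun x => 0 < x) (F m l).
Proof.
move=> /P2_facts[[hs hp hsum hsz] [hj hj1 hj2]].
set j := durfee_j m l in hj hj1 hj2.
apply/(all_nthP 0) => i; rewrite size_F => hi.
rewrite nth_F // /g -/j.
have hsz2 := nth_pos_size l ((m + j).-1) ltac:(lia).
case: ifP => h1; last by case: ifP.
apply: nth_pos => //; lia.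
Qed.

Lemma F_durfee {m n l} : inP2 m n l -> durfee_j m (F m l) = durfee_j m l.
Proof.
move=> H; have [[hs hp hsum hsz] [hj hj1 hj2]] := P2_facts H.
set j := durfee_j m l in hj hj1 hj2 *.
have hsz2 := nth_pos_size l ((m + j).-1) ltac:(lia).
apply: durfee_j_eq => //; first exact: F_sorted H.
  rewrite nth_F; last by lia.
  by rewrite /g -/j ifF ?ifT //; lia.
rewrite nth_F; last by lia.
by rewrite /g -/j ifF ?ifT //; lia.
Qed.

Lemma sumn_iota (G : nat -> nat) a K :
  sumn (map G (iota a K)) = \sum_(a <= i < a + K) G i.
Proof.
elim: K a => [|K IH] a /=; first by rewrite addn0 big_geq.
by rewrite IH (@big_ltn _ _ _ a) ?addSn ?addnS //; lia.
Qed.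

Lemma sumn_nth_ext (l : seq nat) K : size l <= K ->
  sumn l = \sum_(0 <= i < K) nth 0 l i.
Proof.
elim: l K => [|x l IH] K /=.
  by move=> _; rewrite big1 // => i _; rewrite nth_nil.
case: K => // K hK.
by rewrite big_ltn // big_add1 /= (IH K hK).
Qed.

Lemma F_sum {m n l} : inP2 m n l -> sumn (F m l) = n.
Proof.
move=> H; have [[hs hp hsum hsz] [hj hj1 hj2]] := P2_facts H.
set j := durfee_j m l in hj hj1 hj2 *.
have hsz2 := nth_pos_size l ((m + j).-1) ltac:(lia).
have hh : nth 0 l 0 = head 0 l by rewrite nth0.
rewrite /F /mkseq sumn_iota add0n.
set N := head 0 l + m.
set a := m + j in hj1 hj2 hsz2 *.
rewrite -hsum (sumn_nth_ext l N); last by lia.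
rewrite (@big_cat_nat _ _ _ a.-1 0 N); [|lia|lia].
rewrite (@big_cat_nat _ _ _ a.+1 a.-1 N); [|lia|lia].
rewrite (@big_cat_nat _ _ _ a.+1 0 N); [|lia|lia].
rewrite (@big_cat_nat _ _ _ 1 0 a.+1); [|lia|lia].
rewrite (@big_cat_nat _ _ _ a 1 a.+1); [|lia|lia].
rewrite big_nat1 big_nat1 hj2 hh.
have -> : \sum_(0 <= i < a.-1) g m l i = \sum_(0 <= i < a.-1) nth 0 l i.+1.
  apply: eq_big_nat => i /andP[_ hi]; rewrite /g -/j -/a ifT //; lia.
have -> : \sum_(1 <= i < a) nth 0 l i = \sum_(0 <= i < a.-1) nth 0 l i.+1.
  have ea : a = a.-1.+1 by lia.
  by rewrite {1}ea big_add1.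
have -> : \sum_(a.-1 <= i < a.+1) g m l i = \sum_(a.-1 <= i < a.+1) j.
  apply: eq_big_nat => i /andP[hi1 hi2]; rewrite /g -/j -/a ifF ?ifT //; lia.
have -> : \sum_(a.+1 <= i < N) g m l i = \sum_(a.+1 <= i < N) (nth 0 l i + 1).
  apply: eq_big_nat => i /andP[hi1 hi2]; rewrite /g -/j -/a ifF ?ifF ?addn1 //; lia.
rewrite big_split /= !sum_nat_const_nat.
have eN : N = head 0 l + m by [].
have ea : a = m + j by [].
have e2 : a.+1 - a.-1 = 2 by lia.
rewrite e2 muln1.
lia.
Qed.

Lemma F_inQ2 {m n l} : inP2 m n l -> inQ2 m n (F m l).
Proof.
move=> H; have [[hs hp hsum hsz] [hj hj1 hj2]] := P2_facts H.
have hsz2 := nth_pos_size l ((m + durfee_j m l).-1) ltac:(lia).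
have mo := nth_mono l _ _ hs.
rewrite /inQ2 /inQ /is_partition /durfee_alpha /durfee_beta (F_durfee H).
set j := durfee_j m l in hj hj1 hj2 hsz2 *.
have hmF : m < size (F m l) by rewrite size_F; lia.
rewrite hmF.
apply/and4P; split => //.
- apply/andP; split.
    apply/and3P; split; [exact: F_sorted H | exact: F_pos H | apply/eqP; exact: F_sum H].
  rewrite /in_rank_set; apply/orP; left; apply/hasP; exists (m + j).+1.
    by rewrite mem_iota size_F; lia.
  rewrite /part /= nth_F; last by lia.
  have c1 : ((m + j).+1 < m + j) = false by lia.
  rewrite /g -/j c1 leqnn.
  apply/eqP; lia.
- rewrite size_map size_iota size_drop size_F -nth0 nth_F; last by lia.
  rewrite /g -/j.
  case: ifP => c1.
    have := mo 0 1 isT; rewrite nth0; lia.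
  lia.
- case E: (head 0 (F m l) - j) => [|k] /=; first by lia.
  set t := take (m + j) (F m l).
  have ht : size t = m + j by rewrite size_takel // size_F; lia.
  have : count (fun x => j + 1 <= x) t != size t.
    rewrite -all_count; apply/negP => /(all_nthP 0) H'.
    have := H' (m + j).-1 ltac:(lia).
    rewrite nth_take; last by lia.
    rewrite nth_F; last by lia.
    have c1 : ((m + j).-1.+1 < m + j) = false by lia.
    have c2 : ((m + j).-1 <= m + j) = true by lia.
    rewrite /g -/j c1 c2; lia.
  have := count_size (fun x => j + 1 <= x) t.
  lia.
Qed.

Theorem lemma2p5 (m n : nat) (hn : 1 < n) :
  exists f : seq nat -> seq nat,
    (forall l, inP2 m n l -> inQ2 m n (f l)) /\
    {in inP2 m n &, injective f}.
Proof.
exists (F m); split; first by move=> l; apply: F_inQ2.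
move=> l1 l2 H1 H2 E.
have [[hs1 hp1 hsum1 hsz1] [hj1 hj11 hj21]] := P2_facts H1.
have [[hs2 hp2 hsum2 hsz2] [hj2 hj12 hj22]] := P2_facts H2.
have ej : durfee_j m l1 = durfee_j m l2 by rewrite -(F_durfee H1) -(F_durfee H2) E.
have eh : head 0 l1 = head 0 l2 by have := congr1 size E; rewrite !size_F; lia.
have EN := fun i => congr1 (fun s => nth 0 s i) E.
set j := durfee_j m l1 in ej hj1 hj11 hj21.
have s1 := nth_pos_size l1 ((m + j).-1) ltac:(lia).
have en : forall i, nth 0 l1 i = nth 0 l2 i.
  case => [|i]; first by rewrite !nth0.
  case: (ltngtP i.+1 (m + j)) => c.
  - have := EN i; rewrite !nth_F; [|lia|lia].
    by rewrite /g -ej -/j c.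
  - case: (ltnP i.+1 (head 0 l1 + m)) => c'.
      have := EN i.+1; rewrite !nth_F; [|lia|lia].
      have c1 : (i.+2 < m + j) = false by lia.
      have c2 : (i.+1 <= m + j) = false by lia.
      by rewrite /g -ej -/j c1 c2 => [[]].
    by rewrite !nth_default //; lia.
  - by rewrite c hj21 ej hj22.
apply: (eq_from_nth (x0 := 0)) => [|i _]; last exact: en.
case: (ltngtP (size l1) (size l2)) => // h.
  by have := nth_pos l2 (size l1) hp2 h; rewrite -en nth_default.
by have := nth_pos l1 (size l2) hp1 h; rewrite en nth_default.
Qed.
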